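(* Let $A\in\mathcal{S}_n$, $b_1\in\mathbb{R}^n_{++}$, and consider the problem $(\bar P_1)$: $\bar f_1^*=\sup\{\lambda\in\mathbb{R}: A-\lambda b_1b_1^T\in\mathcal{C}_n\}$. (1) If $(\bar P_1)$ is infeasible, then $A\notin\mathcal{C}_n$. (2) If $(\bar P_1)$ is feasible, then: (i) if $\bar f_1^*<0$, then $A\notin\mathcal{C}_n$; (ii) if $\bar f_1^*=0$, then $A\in\operatorname{bd}(\mathcal{C}_n)$; (iii) if $\bar f_1^*>0$ and $\operatorname{rank}(A)<n$, then $A\in\operatorname{bd}(\mathcal{C}_n)$; (iv) if $\bar f_1^*>0$ and $\operatorname{rank}(A)=n$, then $A\in\operatorname{int}(\mathcal{C}_n)$.
   Context: $\mathcal{S}_n$: real symmetric $n\times n$ matrices. $\mathcal{C}_n=\{BB^T: B\in\mathbb{R}^{n\times m}\text{ entrywise nonnegative},\ m\ge1\}$ is the completely positive cone; $\operatorname{int}$ and $\operatorname{bd}$ denote interior and boundary in $\mathcal{S}_n$. $\mathbb{R}^n_{++}=\{x\in\mathbb{R}^n: x>0\text{ entrywise}\}$. *)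

(* Defs.v *)
From HB Require Import structures.
From Stdlib Require Import Reals ClassicalEpsilon FunctionalExtensionality.
From mathcomp Require Import all_boot all_algebra.

Set Implicit Arguments.
Unset Strict Implicit.
Unset Printing Implicit Defensive.

Definition R_eqb (x y : R) : bool := if Req_EM_T x y then true else false.

Lemma R_eqP : Equality.axiom R_eqb.
Proof. by move=> x y; rewrite /R_eqb; destruct (Req_EM_T x y); constructor. Qed.

HB.instance Definition _ := hasDecEq.Build R R_eqP.

Definition R_find (P : pred R) (n : nat) : option R :=
  match n with
  | 0 => match excluded_middle_informative (exists x, P x) with
         | left h => Some (proj1_sig (constructive_indefinite_description _ h))
         | right _ => None
         end
  | _ => None
  end.

Lemma R_find_correct P n x : R_find P n = Some x -> P x.
Proof.
case: n => [|n] //=; case: excluded_middle_informative => // h [<-].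
exact: proj2_sig (constructive_indefinite_description _ h).
Qed.

Lemma R_find_complete (P : pred R) : (exists x, P x) -> exists n, R_find P n.
Proof. by move=> h; exists 0%N => /=; case: excluded_middle_informative. Qed.

Lemma R_find_ext (P Q : pred R) : P =1 Q -> R_find P =1 R_find Q.
Proof. by move=> /functional_extensionality ->. Qed.

HB.instance Definition _ :=
  hasChoice.Build R R_find_correct R_find_complete R_find_ext.

Lemma R_addA : associative Rplus.
Proof. by move=> x y z; rewrite Rplus_assoc. Qed.
Lemma R_addC : commutative Rplus.
Proof. exact: Rplus_comm. Qed.
Lemma R_add0 : left_id R0 Rplus.
Proof. exact: Rplus_0_l. Qed.
Lemma R_addN : left_inverse R0 Ropp Rplus.
Proof. exact: Rplus_opp_l. Qed.

HB.instance Definition _ := GRing.isZmodule.Build R R_addA R_addC R_add0 R_addN.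

Lemma R_mulA : associative Rmult.
Proof. by move=> x y z; rewrite Rmult_assoc. Qed.
Lemma R_mulC : commutative Rmult.
Proof. exact: Rmult_comm. Qed.
Lemma R_mul1 : left_id R1 Rmult.
Proof. exact: Rmult_1_l. Qed.
Lemma R_mulDl : left_distributive Rmult Rplus.
Proof. by move=> x y z; rewrite Rmult_plus_distr_r. Qed.
Lemma R_one_neq0 : R1 != R0.
Proof. by apply/eqP; exact: R1_neq_R0. Qed.

HB.instance Definition _ :=
  GRing.Zmodule_isComNzRing.Build R R_mulA R_mulC R_mul1 R_mulDl R_one_neq0.

Definition R_inv (x : R) : R := if Req_EM_T x R0 then R0 else Rinv x.

Lemma R_mulVf (x : R) : x != R0 -> Rmult (R_inv x) x = R1.
Proof.
move/eqP=> hx; rewrite /R_inv; destruct (Req_EM_T x R0) as [h|h].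
  by case: hx.
exact: Rinv_l.
Qed.

Lemma R_inv0 : R_inv R0 = R0.
Proof. by rewrite /R_inv; destruct (Req_EM_T R0 R0). Qed.

HB.instance Definition _ := GRing.ComNzRing_isField.Build R R_mulVf R_inv0.

Local Open Scope ring_scope.

Definition symmetric_mx (n : nat) (A : 'M[R]_n) : Prop := A^T = A.

Definition nonneg_mx (n m : nat) (B : 'M[R]_(n, m)) : Prop :=
  forall i j, Rle R0 (B i j).

Definition pos_vec (n : nat) (b : 'cV[R]_n) : Prop :=
  forall i, Rlt R0 (b i ord0).

Definition CP (n : nat) (A : 'M[R]_n) : Prop :=
  exists (m : nat) (B : 'M[R]_(n, m)),
    (0 < m)%N /\ nonneg_mx B /\ A = B *m B^T.

(* Topology of S_n (finite-dimensional, so induced by any norm; we use the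
   max-entry norm). The ball in S_n of radius eps around A: *)
Definition in_sym_ball (n : nat) (A : 'M[R]_n) (eps : R) (X : 'M[R]_n) : Prop :=
  symmetric_mx X /\ forall i j, Rlt (Rabs (X i j - A i j)) eps.

Definition CP_interior (n : nat) (A : 'M[R]_n) : Prop :=
  symmetric_mx A /\
  exists eps : R, Rlt R0 eps /\ forall X, in_sym_ball A eps X -> CP X.

Definition CP_closure (n : nat) (A : 'M[R]_n) : Prop :=
  symmetric_mx A /\
  forall eps : R, Rlt R0 eps -> exists X, in_sym_ball A eps X /\ CP X.

Definition CP_boundary (n : nat) (A : 'M[R]_n) : Prop :=
  CP_closure A /\ ~ CP_interior A.

Definition P1_feasible_set (n : nat) (A : 'M[R]_n) (b : 'cV[R]_n) (l : R) : Prop :=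
  CP (A - l *: (b *m b^T)).

(* Main.v *)
Require Import Defs.
From HB Require Import structures.
From Stdlib Require Import Reals Lra Classical.
From mathcomp Require Import all_boot all_algebra.
Set Implicit Arguments. Unset Strict Implicit. Unset Printing Implicit Defensive.
Import GRing.Theory.
Local Open Scope ring_scope.

Lemma RaddE (x y : R) : x + y = Rplus x y. Proof. by []. Qed.
Lemma RoppE (x : R) : - x = Ropp x. Proof. by []. Qed.
Lemma RmulE (x y : R) : x * y = Rmult x y. Proof. by []. Qed.
Lemma R0E : (0 : R) = R0. Proof. by []. Qed.
Lemma R1E : (1 : R) = R1. Proof. by []. Qed.
Lemma natrE (k : nat) : (k%:R : R) = INR k.
Proof. elim: k => [//|k IH]. by rewrite -addn1 natrD IH plus_INR. Qed.
Lemma RinvE (x : R) : x <> R0 -> x^-1 = Rinv x.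
Proof. move=> h. rewrite /GRing.inv /= /R_inv. by case: Req_EM_T. Qed.

Definition RE := (RaddE, RoppE, RmulE, R0E, R1E).
Lemma trZ m n (a : R) (A : 'M[R]_(m,n)) : (a *: A)^T = a *: A^T.
Proof. by apply/matrixP => i j; rewrite !mxE. Qed.
Ltac genent := repeat match goal with |- context[@fun_of_matrix ?T ?m ?n ?M ?i ?j] =>
  let x := fresh "x" in move: (@fun_of_matrix T m n M i j) => x end.
Ltac Rring := genent; repeat match goal with |- context[GRing.one ?x] => change (GRing.one x) with R1 end;
  repeat match goal with |- context[GRing.zero ?x] => change (GRing.zero x) with R0 end;
  match goal with |- ?a = ?b => change (@eq R a b) end; ring.

Lemma fin_common (T : finType) (Q : T -> R -> Prop) :
  (forall t e e', Rlt R0 e' -> Rle e' e -> Q t e -> Q t e') ->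
  (forall t, exists e, Rlt R0 e /\ Q t e) ->
  exists e, Rlt R0 e /\ forall t, Q t e.
Proof.
move=> down ex.
suff [e [e0 He]] : exists e, Rlt R0 e /\ forall t, t \in enum T -> Q t e.
  by exists e; split=> // t; apply: He; rewrite mem_enum.
elim: (enum T) => [|x s [es [es0 Hs]]].
  by exists R1; split=> //; lra.
have [ex0 [ex0p Hx]] := ex x.
exists (Rmin ex0 es); split; first by apply: Rmin_glb_lt.
move=> t; rewrite inE => /orP [/eqP->|ts].
  apply: down Hx; [by apply: Rmin_glb_lt | exact: Rmin_l].
apply: down (Hs t ts); [by apply: Rmin_glb_lt | exact: Rmin_r].
Qed.

Lemma fin_bound (T : finType) (F : T -> R) :
  exists M, Rlt R0 M /\ forall t, Rle (Rabs (F t)) M.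
Proof.
suff [M [M0 HM]] : exists M, Rlt R0 M /\ forall t, t \in enum T -> Rle (Rabs (F t)) M.
  by exists M; split=> // t; apply: HM; rewrite mem_enum.
elim: (enum T) => [|x s [M [M0 Hs]]].
  by exists R1; split=> //; lra.
exists (Rmax (Rabs (F x)) M); split.
  apply: Rlt_le_trans M0 _; exact: Rmax_r.
move=> t; rewrite inE => /orP [/eqP->|ts]; first exact: Rmax_l.
apply: Rle_trans (Hs t ts) _; exact: Rmax_r.
Qed.

Lemma CP_add n (X Y : 'M[R]_n) : CP X -> CP Y -> CP (X + Y).
Proof.
move=> [m1 [B1 [m1p [B1n ->]]]] [m2 [B2 [m2p [B2n ->]]]].
exists (m1 + m2)%N, (row_mx B1 B2); split; first by rewrite addn_gt0 m1p.
split; last by rewrite tr_row_mx mul_row_col.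
move=> i j; rewrite /row_mx mxE; case: split => k; [exact: B1n | exact: B2n].
Qed.

Lemma CP_scale n (X : 'M[R]_n) (s : R) : Rle R0 s -> CP X -> CP (s *: X).
Proof.
move=> s0 [m [B [mp [Bn ->]]]].
exists m, (sqrt s *: B); split=> //; split.
  move=> i j; rewrite mxE; apply: Rmult_le_pos; [exact: sqrt_pos | exact: Bn].
rewrite linearZ /= -scalemxAl -scalemxAr scalerA.
by rewrite RmulE sqrt_sqrt.
Qed.

Lemma CP_rank1 n (v : 'cV[R]_n) : (forall i, Rle R0 (v i ord0)) -> CP (v *m v^T).
Proof.
move=> vn; exists 1%N, v; split=> //; split=> // i j.
by rewrite (ord1 j).
Qed.

Lemma CP0 n : CP (0 : 'M[R]_n).
Proof.
exists 1%N, (0 : 'M[R]_(n,1)); split=> //; split; last by rewrite mul0mx.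
by move=> i j; rewrite mxE; apply: Rle_refl.
Qed.

Lemma CP_sum n (I : Type) (r : seq I) (P : pred I) (F : I -> 'M[R]_n) :
  (forall i, P i -> CP (F i)) -> CP (\sum_(i <- r | P i) F i).
Proof.
move=> H; apply: big_ind => //; [exact: CP0 | exact: CP_add].
Qed.

Lemma sum_nonneg (I : Type) (r : seq I) (F : I -> R) :
  (forall i, Rle R0 (F i)) -> Rle R0 (\sum_(i <- r) F i).
Proof.
move=> H; apply: big_ind => //; first exact: Rle_refl.
move=> x y hx hy; rewrite RaddE; lra.
Qed.

Lemma CP_psd n (X : 'M[R]_n) (u : 'rV[R]_n) : CP X -> Rle R0 ((u *m X *m u^T) 0 0).
Proof.
move=> [m [B [mp [Bn ->]]]].
rewrite mulmxA -mulmxA -trmx_mul mxE.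
apply: sum_nonneg => k.
have -> : ((u *m B)^T) k 0 = (u *m B) 0 k by rewrite mxE.
exact: Rle_0_sqr.
Qed.

Lemma sym_rank1 n (v : 'cV[R]_n) : symmetric_mx (v *m v^T).
Proof. by rewrite /symmetric_mx trmx_mul trmxK. Qed.

Lemma sym_rank1r n (u : 'rV[R]_n) : symmetric_mx (u^T *m u).
Proof. by rewrite /symmetric_mx trmx_mul trmxK. Qed.

Lemma ball_pert n (A N : 'M[R]_n) eps : symmetric_mx A -> symmetric_mx N ->
  Rlt R0 eps -> exists eta, Rlt R0 eta /\
  forall c, Rle (Rabs c) eta -> in_sym_ball A eps (A + c *: N).
Proof.
move=> sA sN e0.
have [M [M0 HM]] := fin_bound (fun p : 'I_n * 'I_n => N p.1 p.2).
exists (Rdiv eps (Rmult 2 M)); split.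
  apply: Rdiv_lt_0_compat => //; lra.
move=> c hc; split.
  by rewrite /symmetric_mx linearD linearZ /= sA sN.
move=> i j; rewrite !mxE.
rewrite !RE.
rewrite (_ : Rminus (Rplus (A i j) (Rmult c (N i j))) (A i j) = Rmult c (N i j)); last by ring.
rewrite Rabs_mult.
have := HM (i, j) => /= hN.
have h1 : Rle (Rmult (Rabs c) (Rabs (N i j))) (Rmult (Rdiv eps (Rmult 2 M)) M).
  apply: Rmult_le_compat => //; exact: Rabs_pos.
have h2 : Rmult (Rdiv eps (Rmult 2 M)) M = Rdiv eps 2 by field; lra.
lra.
Qed.

Lemma feas_down n (A : 'M[R]_n) b l l' : pos_vec b ->
  P1_feasible_set A b l -> Rle l' l -> P1_feasible_set A b l'.
Proof.
move=> pb H hl; rewrite /P1_feasible_set in H *.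
have -> : A - l' *: (b *m b^T) = (A - l *: (b *m b^T)) + (l - l') *: (b *m b^T).
  by rewrite scalerBl addrA subrK.
apply: CP_add => //; apply: CP_scale; first by rewrite !RE; lra.
by apply: CP_rank1 => i; apply: Rlt_le; apply: pb.
Qed.

Lemma sum_sq_pos n (u : 'rV[R]_n) : u != 0 -> Rlt R0 ((u *m u^T) 0 0).
Proof.
move=> nz.
have [k hk] : exists k, u 0 k <> R0.
  apply: NNPP => hn; move/eqP: nz; apply; apply/matrixP => i j.
  rewrite (ord1 i) mxE; apply: NNPP => h; apply: hn; by exists j.
rewrite mxE (bigD1 k) //= RaddE.
have -> : (u^T k 0 = u 0 k) by rewrite mxE.
have h1 : Rlt R0 (Rmult (u 0 k) (u 0 k)) by nra.
have h2 : Rle R0 (\sum_(i < n | i != k) u 0 i * u^T i 0).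
  rewrite big_mkcond; apply: sum_nonneg => i; case: (i != k); last exact: Rle_refl.
  rewrite [u^T i 0]mxE; exact: Rle_0_sqr.
apply: Rplus_lt_le_0_compat; [exact: h1 | exact: h2].
Qed.

Lemma ker_vec n (A : 'M[R]_n) : (\rank A < n)%N -> exists u : 'rV[R]_n, u != 0 /\ u *m A = 0.
Proof.
move=> hr.
have hK : kermx A != 0.
  apply/eqP => h; have := mxrank_ker A; rewrite h mxrank0 => /esym/eqP.
  by rewrite subn_eq0 leqNgt hr.
have [i hi] : exists i, row i (kermx A) != 0.
  apply: NNPP => hn; move/eqP: hK; apply; apply/row_matrixP => i.
  rewrite row0; apply/eqP; apply: NNPP => h; apply: hn; by exists i; apply/negP.
by exists (row i (kermx A)); split=> //; rewrite -row_mul mulmx_ker row0.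
Qed.

Lemma step_d_id n (K V : 'M[R]_n) (g s : R) :
  K - g *: V - (g *: V - (g * g * s) *: V) = K - (g + g - g * g * s) *: V.
Proof. apply/matrixP => i j; rewrite !mxE !RE; Rring. Qed.

Lemma step_d n p (W : 'M[R]_(n,p)) (K : 'M[R]_n) (v : 'cV[R]_n) :
  (0 < p)%N -> (forall i j, Rlt R0 (W i j)) -> W *m W^T = K -> K \in unitmx ->
  (forall i, Rle R0 (v i ord0)) ->
  exists e, Rlt R0 e /\ CP (K - e *: (v *m v^T)).
Proof.
move=> p0 Wpos hWK uK vn.
have [y Wy] : exists y : 'cV[R]_p, W *m y = v.
  by exists (W^T *m (invmx K *m v)); rewrite mulmxA hWK mulmxA mulmxV // mul1mx.
set s := (y^T *m y) 0 0.
have [Mv [Mv0 HMv]] := fin_bound (fun q : 'I_n * 'I_p => (v q.1 ord0 * y q.2 ord0)).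
have [w [w0 Hw]] : exists w, Rlt R0 w /\ forall q : 'I_n * 'I_p, Rle w (W q.1 q.2).
  apply: (fin_common (Q := fun q e => Rle e (W q.1 q.2))).
    move=> q e e' _ h1 h2; lra.
  move=> q; exists (W q.1 q.2); split; [exact: Wpos | exact: Rle_refl].
pose g := Rdiv w (Rmult 2 (Rplus (Rplus Mv 1) (Rmult w (Rabs s)))).
have hden : Rlt R0 (Rplus (Rplus Mv 1) (Rmult w (Rabs s))).
  have := Rabs_pos s; nra.
have g0 : Rlt R0 g by apply: Rdiv_lt_0_compat => //; lra.
have gMv : Rlt (Rmult g Mv) w.
  rewrite /g; apply: (Rmult_lt_reg_r (Rmult 2 (Rplus (Rplus Mv 1) (Rmult w (Rabs s))))); first lra.
  field_simplify; last lra. have := Rabs_pos s; nra.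
have gs : Rlt (Rmult g (Rabs s)) (Rdiv 1 2).
  rewrite /g; apply: (Rmult_lt_reg_r (Rmult 2 (Rplus (Rplus Mv 1) (Rmult w (Rabs s))))); first lra.
  field_simplify; last lra. have := Rabs_pos s; nra.
exists (g + g - g * g * s); split.
  rewrite !RE.
  have : Rle (Rmult g s) (Rmult g (Rabs s)).
    apply: Rmult_le_compat_l; [lra | exact: Rle_abs].
  move=> h; have h4 : Rle (Rmult (Rmult g g) s) (Rmult g (Rdiv 1 2)).
    rewrite Rmult_assoc; apply: Rmult_le_compat_l; lra.
  lra.
set WQ := W - g *: (v *m y^T).
exists p, WQ; split=> //; split.
  move=> i k; rewrite /WQ !mxE big_ord1 !mxE.
  have := HMv (i, k); have := Hw (i, k) => /= h1 h2.
  rewrite !RE.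
  have h3 : Rle (Rmult g (Rmult (v i ord0) (y k ord0))) (Rmult g Mv).
    apply: Rmult_le_compat_l; first lra.
    exact: Rle_trans (Rle_abs _) h2.
  lra.
have h1 : W *m (g *: (y *m v^T)) = g *: (v *m v^T) by rewrite -scalemxAr mulmxA Wy.
have h2 : g *: (v *m y^T) *m W^T = g *: (v *m v^T).
  by rewrite -scalemxAl -mulmxA -trmx_mul Wy.
have h3 : g *: (v *m y^T) *m (g *: (y *m v^T)) = (g * g * s) *: (v *m v^T).
  rewrite -scalemxAl -scalemxAr scalerA mulmxA -(mulmxA v) [y^T *m y]mx11_scalar.
  by rewrite mul_mx_scalar -scalemxAl scalerA.
apply/esym; rewrite /WQ linearB /= trZ trmx_mul trmxK mulmxBl !mulmxBr h1 h2 h3 hWK.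
by rewrite step_d_id.
Qed.

Lemma rot_id n m (P Q : 'M[R]_(n,m)) (t : R) :
  (P + t *: Q) *m (P + t *: Q)^T + (Q - t *: P) *m (Q - t *: P)^T
  = (1 + t * t) *: (P *m P^T + Q *m Q^T).
Proof.
rewrite linearD linearB /= !trZ ?mulmxDl ?mulmxBl ?mulmxDr ?mulmxBr ?mulmxN ?mulNmx.
rewrite -?scalemxAl -?scalemxAr ?scalerA.
move: (P *m P^T) (P *m Q^T) (Q *m P^T) (Q *m Q^T) => a b c d.
apply/matrixP => i j; rewrite !mxE !RE; move: (a i j) (b i j) (c i j) (d i j) => x1 x2 x3 x4; Rring.
Qed.

Lemma step_b n (A C : 'M[R]_n) (b : 'cV[R]_n) (l : R) :
  CP C -> pos_vec b -> Rlt R0 l -> A = C + l *: (b *m b^T) ->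
  exists p (W : 'M[R]_(n,p)) (kap : R), (0 < p)%N /\ Rlt R0 kap /\
    (forall i j, Rlt R0 (W i j)) /\ W *m W^T = kap *: A.
Proof.
move=> [m [B [m0 [Bn hC]]]] pb l0 hA.
have mR0 : Rlt R0 (INR m) by apply: lt_0_INR; apply/ltP.
pose r := Rdiv (INR m) l.
have r0 : Rlt R0 r by apply: Rdiv_lt_0_compat.
have [B' [B'n hB']] : exists B' : 'M[R]_(n,m),
    (forall i k, Rle R0 (B' i k)) /\ B' *m B'^T = r *: C.
  exists (sqrt r *: B); split.
    move=> i k; rewrite mxE; apply: Rmult_le_pos; [exact: sqrt_pos | exact: Bn].
  rewrite hC trZ -scalemxAl -scalemxAr scalerA RmulE sqrt_sqrt //; lra.
have [D [hD hDD]] : exists D : 'M[R]_(n,m),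
    (forall i k, D i k = b i ord0) /\ D *m D^T = INR m *: (b *m b^T).
  pose J := (const_mx 1 : 'M[R]_(1,m)).
  exists (b *m J); split.
    by move=> i k; rewrite mxE big_ord1 mxE mulr1.
  have hJ : J *m J^T = (INR m)%:M.
    apply/matrixP => i j; rewrite (ord1 i) (ord1 j) mxE.
    rewrite (eq_bigr (fun=> 1)); last by move=> k _; rewrite !mxE mulr1.
    by rewrite sumr_const card_ord natrE !mxE /= mulr1n.
  by rewrite trmx_mul mulmxA -(mulmxA b) hJ mul_mx_scalar -scalemxAl.
have [be [be0 Hbe]] : exists be, Rlt R0 be /\ forall i, Rle be (b i ord0).
  apply: (fin_common (Q := fun i e => Rle e (b i ord0))).
    move=> i e e' _ h1 h2; lra.
  move=> i; exists (b i ord0); split; [exact: pb | exact: Rle_refl].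
have [MB [MB0 HMB]] := fin_bound (fun q : 'I_n * 'I_m => B' q.1 q.2).
pose t := Rdiv be (Rplus MB 1).
have t0 : Rlt R0 t by apply: Rdiv_lt_0_compat; lra.
have tMB : Rlt (Rmult t MB) be.
  rewrite /t; apply: (Rmult_lt_reg_r (Rplus MB 1)); first lra.
  field_simplify; lra.
exists (m + m)%N, (row_mx (B' + t *: D) (D - t *: B')), (Rmult (Rplus 1 (Rmult t t)) r).
split; first by rewrite addn_gt0 m0.
split; first by apply: Rmult_lt_0_compat => //; nra.
split.
  move=> i j; rewrite /row_mx mxE; case: split => k; rewrite !mxE hD !RE.
    have := Rmult_lt_0_compat _ _ t0 (pb i); move: (B'n i k) => h; move: (B' i k) h => x h; lra.
  have := Hbe i; have := HMB (i, k) => /= h1 h2.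
  have h3 : Rle (Rmult t (B' i k)) (Rmult t MB).
    apply: Rmult_le_compat_l; first lra.
    exact: Rle_trans (Rle_abs _) h1.
  lra.
rewrite tr_row_mx mul_row_col rot_id hB' hDD hA.
have hrl : INR m = Rmult r l by rewrite /r; field; lra.
rewrite hrl.
move: (C) (b *m b^T) => C0 M0.
apply/matrixP => i j; rewrite !mxE !RE; Rring.
Qed.

Ltac Rfield := genent; repeat match goal with |- context[GRing.one ?x] => change (GRing.one x) with R1 end;
  repeat match goal with |- context[GRing.zero ?x] => change (GRing.zero x) with R0 end;
  match goal with |- ?a = ?b => change (@eq R a b) end; field.

Lemma ev_nonneg n (k : 'I_n) : forall i, Rle R0 ((delta_mx k ord0 : 'cV[R]_n) i ord0).
Proof. by move=> i; rewrite mxE natrE; apply: pos_INR. Qed.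

Lemma G_delta n (k : 'I_n) :
  (delta_mx k ord0 : 'cV[R]_n) *m (delta_mx k ord0)^T = delta_mx k k.
Proof. by rewrite trmx_delta mul_delta_mx. Qed.

Lemma F_delta n (k l : 'I_n) :
  (delta_mx k ord0 + delta_mx l ord0 : 'cV[R]_n) *m (delta_mx k ord0 + delta_mx l ord0)^T
  = delta_mx k k + delta_mx k l + delta_mx l k + delta_mx l l.
Proof.
by rewrite linearD /= !trmx_delta mulmxDl !mulmxDr !mul_delta_mx !addrA.
Qed.

Lemma robust n (A : 'M[R]_n) (v : 'cV[R]_n) e :
  CP A -> (forall i, Rle R0 (v i ord0)) -> Rlt R0 e -> CP (A - e *: (v *m v^T)) ->
  forall c, Rle (Rabs c) e -> CP (A + c *: (v *m v^T)).
Proof.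
move=> cA vn e0 hA c hc.
case: (Rle_or_lt R0 c) => hc0.
  by apply: CP_add => //; apply: CP_scale => //; apply: CP_rank1.
have -> : A + c *: (v *m v^T) = (A - e *: (v *m v^T)) + (e + c) *: (v *m v^T).
  by rewrite scalerDl addrA subrK.
apply: CP_add => //; apply: CP_scale; last by apply: CP_rank1.
rewrite RaddE; have := Rabs_left c hc0; lra.
Qed.

Lemma interior n (A C : 'M[R]_n) (b : 'cV[R]_n) (l : R) :
  symmetric_mx A -> A \in unitmx -> CP C -> pos_vec b -> Rlt R0 l ->
  A = C + l *: (b *m b^T) -> CP_interior A.
Proof.
move=> sA uA cC pb l0 hA.
have cA : CP A.
  rewrite hA; apply: CP_add => //; apply: CP_scale; first lra.
  by apply: CP_rank1 => i; apply: Rlt_le; apply: pb.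
have [p [W [kap [p0 [kap0 [Wpos hW]]]]]] := step_b cC pb l0 hA.
have hv : forall v : 'cV[R]_n, (forall i, Rle R0 (v i ord0)) ->
    exists e, Rlt R0 e /\ CP (A - e *: (v *m v^T)).
  move=> v vn.
  have uK : kap *: A \in unitmx.
    rewrite unitmxZ // unitfE; apply/eqP => h; move: kap0; rewrite h; exact: Rlt_irrefl.
  have [e [e0 He]] := step_d p0 Wpos hW uK vn.
  exists (Rdiv e kap); split; first exact: Rdiv_lt_0_compat.
  have -> : A - Rdiv e kap *: (v *m v^T) = Rinv kap *: (kap *: A - e *: (v *m v^T)).
    move: (v *m v^T) => V; apply/matrixP => i j; rewrite !mxE !RE; Rfield.
    apply: Rgt_not_eq; exact: kap0.
  apply: CP_scale => //; apply: Rlt_le; exact: Rinv_0_lt_compat.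
have [e [e0 He]] : exists e, Rlt R0 e /\ forall q : 'I_n * 'I_n, forall c, Rle (Rabs c) e ->
   CP (A + c *: (delta_mx q.1 q.1 + delta_mx q.1 q.2 + delta_mx q.2 q.1 + delta_mx q.2 q.2))
   /\ CP (A + c *: delta_mx q.1 q.1).
  apply: (fin_common (Q := fun q e => forall c, Rle (Rabs c) e ->
   CP (A + c *: (delta_mx q.1 q.1 + delta_mx q.1 q.2 + delta_mx q.2 q.1 + delta_mx q.2 q.2))
   /\ CP (A + c *: delta_mx q.1 q.1))).
    move=> q e e' e'0 hle H c hc; apply: H; exact: Rle_trans hc hle.
  move=> [k l'] /=.
  have vn1 : forall i, Rle R0 (((delta_mx k ord0 + delta_mx l' ord0)%R : 'cV[R]_n) i ord0).
    move=> i; rewrite mxE; apply: Rplus_le_le_0_compat; apply: ev_nonneg.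
  have [e1 [e10 H1]] := hv _ vn1.
  have [e2 [e20 H2]] := hv _ (ev_nonneg k).
  exists (Rmin e1 e2); split; first exact: Rmin_glb_lt.
  move=> c hc; split.
    rewrite -F_delta; apply: (robust cA vn1 e10 H1); exact: Rle_trans hc (Rmin_l _ _).
  rewrite -G_delta; apply: (robust cA (ev_nonneg k) e20 H2); exact: Rle_trans hc (Rmin_r _ _).
split => //.
case: (posnP n) => [n0 | npos].
  exists R1; split; first lra. move=> X _.
  exists 1%N, 0; split => //; split.
    move=> -[i hi]; exfalso; by rewrite n0 in hi.
  apply/matrixP => -[i hi]; exfalso; by rewrite n0 in hi.
pose nu := INR (n * n).
have nu0 : Rlt R0 nu by apply: lt_0_INR; apply/ltP; rewrite muln_gt0 npos.
exists (Rdiv e (Rmult 2 nu)); split; first by apply: Rdiv_lt_0_compat; lra.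
move=> X [sX hX].
pose E := X - A.
have sE : forall k m', E k m' = E m' k.
  move=> k m'; have : E^T = E by rewrite /E linearB /= sX sA.
  by move/matrixP => /(_ m' k); rewrite mxE.
have hEb : forall k m', Rle (Rabs (E k m')) (Rdiv e (Rmult 2 nu)).
  move=> k m'; rewrite /E !mxE !RE; apply: Rlt_le; exact: (hX k m').
pose T := fun k m' : 'I_n => Rinv nu *: A + Rdiv (E k m') 2 *: (delta_mx k m' + delta_mx m' k).
have cT : forall k m', CP (T k m').
  move=> k m'.
  pose c := Rmult (Rdiv (Rmult 3 nu) 2) (E k m').
  have hc : Rle (Rabs c) e.
    have hpos : Rlt R0 (Rdiv (Rmult 3 nu) 2) by apply: Rdiv_lt_0_compat; lra.
    rewrite /c Rabs_mult Rabs_pos_eq; last exact: Rlt_le.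
    apply: Rle_trans (Rmult_le_compat_l _ _ _ (Rlt_le _ _ hpos) (hEb k m')) _.
    have -> : Rmult (Rdiv (Rmult 3 nu) 2) (Rdiv e (Rmult 2 nu)) = Rmult (Rdiv 3 4) e.
      field; lra.
    lra.
  have hc' : Rle (Rabs (Ropp c)) e by rewrite Rabs_Ropp.
  have [H1 _] := He (k, m') c hc.
  have [_ H2] := He (k, m') (Ropp c) hc'.
  have [_ H3] := He (m', k) (Ropp c) hc'.
  simpl in H1, H2, H3.
  have -> : T k m' = Rinv (Rmult 3 nu) *: ((A + c *: (delta_mx k k + delta_mx k m' + delta_mx m' k + delta_mx m' m'))
      + (A + (Ropp c) *: delta_mx k k) + (A + (Ropp c) *: delta_mx m' m')).
    rewrite /T /c.
    move: (delta_mx k k : 'M[R]_n) (delta_mx k m' : 'M[R]_n) (delta_mx m' k : 'M[R]_n) (delta_mx m' m' : 'M[R]_n) => d1 d2 d3 d4.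
    apply/matrixP => i j; rewrite !mxE !RE; Rfield.
    apply: Rgt_not_eq; lra.
  apply: CP_scale; first by apply: Rlt_le; apply: Rinv_0_lt_compat; lra.
  by apply: CP_add; [apply: CP_add|].
have h1 : \sum_(k < n) \sum_(m' < n) Rinv nu *: A = A.
  rewrite !sumr_const !card_ord -mulrnA -scaler_nat scalerA natrE -/nu RmulE Rinv_r.
    by rewrite (_ : IZR 1 = 1) // scale1r.
  apply: Rgt_not_eq; exact: nu0.
have hx : \sum_(k < n) \sum_(m' < n) Rdiv (E k m') 2 *: delta_mx m' k
        = \sum_(k < n) \sum_(m' < n) Rdiv (E k m') 2 *: delta_mx k m'.
  rewrite exchange_big /=; apply: eq_bigr => k _; apply: eq_bigr => m' _; by rewrite sE.
have h2 : \sum_(k < n) \sum_(m' < n) Rdiv (E k m') 2 *: (delta_mx k m' + delta_mx m' k) = E.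
  have s1 : \sum_(k < n) \sum_(m' < n) Rdiv (E k m') 2 *: (delta_mx k m' + delta_mx m' k)
     = \sum_(k < n) \sum_(m' < n) Rdiv (E k m') 2 *: delta_mx k m'
       + \sum_(k < n) \sum_(m' < n) Rdiv (E k m') 2 *: delta_mx m' k.
    rewrite -big_split /=; apply: eq_bigr => k _; rewrite -big_split /=.
    by apply: eq_bigr => m' _; rewrite scalerDr.
  rewrite s1 hx -big_split /= [RHS]matrix_sum_delta; apply: eq_bigr => k _.
  rewrite -big_split /=; apply: eq_bigr => m' _; rewrite -scalerDl; congr (_ *: _).
  rewrite RaddE; Rfield.
have hXT : X = \sum_(k < n) \sum_(m' < n) T k m'.
  rewrite /T.
  have -> : \sum_(k < n) \sum_(m' < n) (Rinv nu *: A + Rdiv (E k m') 2 *: (delta_mx k m' + delta_mx m' k))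
     = \sum_(k < n) \sum_(m' < n) Rinv nu *: A
       + \sum_(k < n) \sum_(m' < n) Rdiv (E k m') 2 *: (delta_mx k m' + delta_mx m' k).
    rewrite -big_split /=; apply: eq_bigr => k _; by rewrite -big_split.
  by rewrite h1 h2 /E addrC subrK.
rewrite hXT; apply: CP_sum => k _; apply: CP_sum => m' _; exact: cT.
Qed.

Theorem mainTheorem10 (n : nat) (A : 'M[R]_n) (b1 : 'cV[R]_n) :
  symmetric_mx A -> pos_vec b1 ->
  ((~ exists l : R, P1_feasible_set A b1 l) -> ~ CP A) /\
  ((exists l : R, P1_feasible_set A b1 l) ->
   forall f : R, is_lub (P1_feasible_set A b1) f ->
     (Rlt f R0 -> ~ CP A) /\
     (f = R0 -> CP_boundary A) /\
     (Rlt R0 f -> (\rank A < n)%N -> CP_boundary A) /\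
     (Rlt R0 f -> \rank A = n -> CP_interior A)).
Proof.
move=> sA pb.
have pbn : forall i, Rle R0 (b1 i ord0) by move=> i; apply: Rlt_le.
have feas0 : CP A -> P1_feasible_set A b1 R0.
  by move=> h; rewrite /P1_feasible_set (_ : R0 = 0) // scale0r subr0.
have cp_of_feas : forall l, Rlt R0 l -> P1_feasible_set A b1 l -> CP A.
  move=> l l0 h; have := feas_down pb h (Rlt_le _ _ l0).
  by rewrite /P1_feasible_set (_ : R0 = 0) // scale0r subr0.
split.
  move=> nf cA; apply: nf; exists R0; exact: feas0.
move=> _ f [ub lub].
have above : forall x, Rlt x f -> exists l, P1_feasible_set A b1 l /\ Rlt x l.
  move=> x hx; apply: NNPP => hn.
  have : Rle f x.
    apply: lub => l hl; apply: Rnot_lt_le => hlt; apply: hn; by exists l.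
  lra.
split.
  move=> fl cA; have := ub _ (feas0 cA); lra.
split.
  move=> f0; split.
    split => // eps e0.
    have [eta [eta0 H]] := ball_pert sA (sym_rank1 b1) e0.
    have [l [hl hl']] := above (Ropp eta) (ltac:(rewrite f0; lra)).
    exists (A + eta *: (b1 *m b1^T)); split.
      apply: H; rewrite Rabs_pos_eq; lra.
    have := feas_down pb hl (Rlt_le _ _ hl').
    by rewrite /P1_feasible_set (_ : Ropp eta = - eta) // scaleNr opprK.
  move=> [_ [eps [e0 H]]].
  have [eta [eta0 Hb]] := ball_pert sA (sym_rank1 b1) e0.
  have hX := H _ (Hb (Ropp eta) (ltac:(rewrite Rabs_Ropp Rabs_pos_eq; lra))).
  have : P1_feasible_set A b1 eta.
    by rewrite /P1_feasible_set; move: hX; rewrite (_ : Ropp eta = - eta) // scaleNr.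
  move/ub; lra.
split.
  move=> f0 hr.
  have [l [hl hl0]] := above R0 f0.
  have cA := cp_of_feas l hl0 hl.
  split.
    split => // eps e0; exists A; split => //; split => // i j.
    rewrite (Rminus_diag_eq _ _ (erefl _)) Rabs_R0; exact: e0.
  move=> [_ [eps [e0 H]]].
  have [u [unz uA]] := ker_vec hr.
  have [eta [eta0 Hb]] := ball_pert sA (sym_rank1r u) e0.
  have cX := H _ (Hb (Ropp eta) (ltac:(rewrite Rabs_Ropp Rabs_pos_eq; lra))).
  have := CP_psd u cX.
  have e1 : u *m (A + Ropp eta *: (u^T *m u)) *m u^T = Ropp eta *: ((u *m u^T) *m (u *m u^T)).
    by rewrite mulmxDr mulmxDl uA mul0mx add0r -scalemxAr -scalemxAl !mulmxA.
  rewrite e1 mxE [u *m u^T]mx11_scalar -scalar_mxM mxE /= mulr1n.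
  have hs := sum_sq_pos unz.
  move: hs; move: ((u *m u^T) 0 0) => s hs h.
  rewrite !RE in h.
  have h2 := Rmult_lt_0_compat _ _ eta0 (Rmult_lt_0_compat _ _ hs hs).
  rewrite -Ropp_mult_distr_l in h. lra.
move=> f0 hr.
have [l [hl hl0]] := above R0 f0.
apply: (interior sA _ hl pb hl0).
  by rewrite -row_free_unit /row_free hr eqxx.
by rewrite subrK.
Qed.
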